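(* Let $V$ be a topological real vector space, $N:V\to\mathbb{R}$ a function, and $\alpha>1$ a real number. The following are equivalent: (1) $N$ is strictly sub-convex and is a Minkowski norm on $V$. (2) $N$ is non-negative, positively homogeneous (i.e. $N(\lambda x)=\lambda N(x)$ for all $x\in V$, $\lambda>0$), continuous, and $N^{\alpha}$ is strictly convex.
   Context: Topological real vector spaces are not assumed Hausdorff. A Minkowski norm on a real vector space $V$ is a function $N:V\to\mathbb{R}$ that is non-negative, satisfies $N(\lambda x)=\lambda N(x)$ for all $x\in V$ and real $\lambda>0$, satisfies $N(x+y)\le N(x)+N(y)$ for all $x,y$, and satisfies $N(x)\neq 0$ for $x\neq 0$. A function $g$ on a convex set is strictly convex if $g((1-t)x+ty)<(1-t)g(x)+tg(y)$ for all distinct $x,y$ and $t\in(0,1)$. For $f:C\to\mathbb{R}$ and $r\in\mathbb{R}$, $S_r(f)=\{x\in C: f(x)\le r\}$. For a subset $S$, $\mathrm{Aff}(S)$ is its affine hull; $\mathrm{ri}(S)$ and $\mathrm{rc}(S)$ are the interior and closure of $S$ in the subspace topology of $\mathrm{Aff}(S)$. $]x,y[=\{(1-t)x+ty: t\in[0,1]\}\setminus\{x,y\}$. A subset $C$ is strictly convex if for any two distinct $x,y\in\mathrm{rc}(C)$ one has $]x,y[\subseteq\mathrm{ri}(C)$. A function $f:C\to\mathbb{R}$ is strictly sub-convex if $S_r(f)$ is strictly convex for every $r\in\mathbb{R}$. *)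

(* Defs.v *)
From HB Require Import structures.
From mathcomp Require Import all_boot all_order all_algebra.
From mathcomp Require Import all_classical all_reals all_analysis.
Set Implicit Arguments. Unset Strict Implicit. Unset Printing Implicit Defensive.
Import Order.TTheory GRing.Theory Num.Theory numFieldTopology.Exports.
Local Open Scope classical_set_scope.
Local Open Scope ring_scope.

(* V : topologicalLmodType R is a (not necessarily Hausdorff) topological
   vector space over the real field R (continuous addition, negation and
   scalar multiplication). *)

Section Defs.
Context {R : realType} {V : topologicalLmodType R}.

Definition minkowski_norm (N : V -> R) : Prop :=
  [/\ (forall x, 0 <= N x),
      (forall x (l : R), 0 < l -> N (l *: x) = l * N x),
      (forall x y, N (x + y) <= N x + N y) &
      (forall x, x != 0 -> N x != 0)].

Definition strictly_convex_fun (C : set V) (g : V -> R) : Prop :=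
  forall x y (t : R), C x -> C y -> x != y -> 0 < t < 1 ->
    g ((1 - t) *: x + t *: y) < (1 - t) * g x + t * g y.

Definition sublevel (C : set V) (f : V -> R) (r : R) : set V :=
  [set x | C x /\ f x <= r].

Definition aff_hull (S : set V) : set V :=
  [set y | exists n (c : 'I_n -> R) (x : 'I_n -> V),
     [/\ (forall i, S (x i)), \sum_(i < n) c i = 1 &
         y = \sum_(i < n) c i *: x i]].

(* relative interior: interior of S in the subspace topology of Aff(S) *)
Definition rel_interior (S : set V) : set V :=
  [set x | S x /\ exists U : set V, [/\ open U, U x & U `&` aff_hull S `<=` S]].

(* relative closure: closure of S in the subspace topology of Aff(S) *)
Definition rel_closure (S : set V) : set V :=
  [set x | aff_hull S x /\
     forall U : set V, open U -> U x -> U `&` S !=set0].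

Definition open_segment (x y : V) : set V :=
  [set z | exists2 t : R, 0 <= t <= 1 & z = (1 - t) *: x + t *: y]
  `\` [set x; y].

Definition strictly_convex_set (C : set V) : Prop :=
  forall x y, rel_closure C x -> rel_closure C y -> x != y ->
    open_segment x y `<=` rel_interior C.

Definition strictly_subconvex (C : set V) (f : V -> R) : Prop :=
  forall r : R, strictly_convex_set (sublevel C f r).

End Defs.

(* Main.v *)
Require Import Defs.
From HB Require Import structures.
From mathcomp Require Import all_boot all_order all_algebra.
From mathcomp Require Import all_classical all_reals all_analysis.
From mathcomp Require Import ring lra.
Import Order.TTheory GRing.Theory Num.Theory numFieldTopology.Exports.
Local Open Scope classical_set_scope.
Local Open Scope ring_scope.

Section Scal.
Context {R : realType}.

Lemma powR_cont_on (a x y : R) : 0 < x ->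
  {within [set` `[x, y]%R], continuous (@powR R ^~ a)}.
Proof.
move=> x0; apply: derivable_within_continuous => z; rewrite in_itv /= => /andP[xz _].
by apply: derivable_powR; rewrite in_itv /= andbT (lt_le_trans x0).
Qed.

Lemma bern_strict (a u : R) : 1 < a -> 0 <= u -> u != 1 -> 1 + a * (u - 1) < u `^ a.
Proof.
move=> a1 u0 u1.
have a0 : 0 < a by rewrite (lt_trans ltr01).
have am1 : 0 < a - 1 by rewrite subr_gt0.
case: (eqVneq u 0) => [->|un0].
  by rewrite powR0 ?gt_eqF // sub0r mulrN1 subr_lt0.
have upos : 0 < u by rewrite lt_neqAle eq_sym un0.
case: (ltgtP u 1) u1 => // [ult|ugt] _.
- have D : forall c, c \in `]u, 1[ -> is_derive c 1 (@powR R ^~ a) (a * c `^ (a - 1)).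
    move=> c; rewrite in_itv /= => /andP[uc _]; apply: is_derive1_powR; exact: lt_trans uc.
  have [c cI E] := MVT ult D (@powR_cont_on a u 1 upos).
  have c0 : 0 < c by rewrite (lt_trans upos) ?(itvP cI).
  have c1 : c `^ (a - 1) < 1.
    have := @gt0_ltr_powR R (a - 1) am1 c 1; rewrite powR1; apply;
      by rewrite ?nnegrE ?(ltW c0) ?(itvP cI).
  move: E; rewrite powR1 => E.
  have : 1 - u `^ a < a * (1 - u).
    rewrite E -mulrA ltr_pM2l // gtr_pMl ?subr_gt0 //.
  lra.
- have D : forall c, c \in `]1, u[ -> is_derive c 1 (@powR R ^~ a) (a * c `^ (a - 1)).
    move=> c; rewrite in_itv /= => /andP[uc _]; apply: is_derive1_powR; exact: lt_trans uc.
  have [c cI E] := MVT ugt D (@powR_cont_on a 1 u ltr01).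
  have c1 : 1 < c `^ (a - 1).
    have := @gt0_ltr_powR R (a - 1) am1 1 c; rewrite powR1; apply;
      by rewrite ?nnegrE ?ler01 ?(itvP cI) // ltW // (lt_trans ltr01) ?(itvP cI).
  move: E; rewrite powR1 => E.
  have : a * (u - 1) < u `^ a - 1.
    rewrite E -mulrA ltr_pM2l // ltr_pMl ?subr_gt0 //.
  lra.
Qed.

Lemma jensen_strict (a x y t : R) : 1 < a -> 0 <= x -> 0 <= y -> x != y -> 0 < t < 1 ->
  ((1 - t) * x + t * y) `^ a < (1 - t) * x `^ a + t * y `^ a.
Proof.
move=> a1 x0 y0 xy /andP[t0 t1].
set m := (1 - t) * x + t * y.
have t1' : 0 < 1 - t by rewrite subr_gt0.
have m0 : 0 < m.
  rewrite /m; case: (eqVneq x 0) => [x00|xn0].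
    rewrite x00 mulr0 add0r mulr_gt0 // lt_neqAle eq_sym y0 andbT.
    by move: xy; rewrite x00 eq_sym.
  have xp : 0 < x by rewrite lt_neqAle eq_sym xn0.
  have := mulr_gt0 t1' xp; have := mulr_ge0 (ltW t0) y0; lra.
have mn0 : m != 0 by rewrite gt_eqF.
have xm : x / m != 1.
  apply/negP => /eqP/(congr1 (fun z => z * m)); rewrite mulfVK // mul1r /m => E.
  have : t * (y - x) = 0 by lra.
  by move/eqP; rewrite mulf_eq0 gt_eqF //= subr_eq0 eq_sym (negbTE xy).
have ym : y / m != 1.
  apply/negP => /eqP/(congr1 (fun z => z * m)); rewrite mulfVK // mul1r /m => E.
  have : (1 - t) * (x - y) = 0 by lra.
  by move/eqP; rewrite mulf_eq0 gt_eqF //= subr_eq0 (negbTE xy).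
have ex : x = m * (x / m) by rewrite mulrC mulfVK.
have ey : y = m * (y / m) by rewrite mulrC mulfVK.
have hx := bern_strict a (x / m) a1 (divr_ge0 x0 (ltW m0)) xm.
have hy := bern_strict a (y / m) a1 (divr_ge0 y0 (ltW m0)) ym.
rewrite [in X in _ < (1 - t) * X `^ a + _]ex [in X in _ < _ + t * X `^ a]ey.
rewrite (@powRM R m (x / m) a) ?(ltW m0) ?divr_ge0 ?(ltW m0) //.
rewrite (@powRM R m (y / m) a) ?(ltW m0) ?divr_ge0 ?(ltW m0) //.
have pm : 0 < m `^ a by apply: powR_gt0.
have key : 1 < (1 - t) * (x / m) `^ a + t * (y / m) `^ a.
  have : (1 - t) * (1 + a * (x / m - 1)) + t * (1 + a * (y / m - 1)) = 1.
    have : (1 - t) * (x / m) + t * (y / m) = 1.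
      by rewrite !mulrA -mulrDl -/m divff.
    move=> H.
    have -> : (1 - t) * (1 + a * (x / m - 1)) + t * (1 + a * (y / m - 1)) =
      1 + a * ((1 - t) * (x / m) + t * (y / m) - 1) by ring.
    by rewrite H subrr mulr0 addr0.
  move=> E; rewrite -[X in X < _]E; apply: ltrD; rewrite ltr_pM2l //.
have -> : (1 - t) * (m `^ a * (x / m) `^ a) + t * (m `^ a * (y / m) `^ a) =
  m `^ a * ((1 - t) * (x / m) `^ a + t * (y / m) `^ a) by ring.
by rewrite -[X in X < _]mulr1 ltr_pM2l.
Qed.
End Scal.

Section Cont.
Context {R : realType} {V : topologicalLmodType R}.

Lemma cont_aff (a : V) (e : R) : continuous (fun t : V => e *: (t - a)).
Proof.
move=> t.
apply: (@continuous_comp _ _ _ (fun t => ((e : R^o), t - a)) (fun z : R^o * V => z.1 *: z.2)); last exact: scale_continuous.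
apply: (@cvg_pair _ _ _ _ (nbhs (e : R^o))); first exact: cvg_cst.
apply: (@continuous_comp _ _ _ (fun t => (t, - a)) (fun z : V * V => z.1 + z.2)); last exact: add_continuous.
by apply: (@cvg_pair _ _ _ _ (nbhs t)); [exact: cvg_id|exact: cvg_cst].
Qed.

Lemma cont_scal (z : V) : continuous (fun l : R^o => l *: z).
Proof.
move=> l.
apply: (@continuous_comp _ _ _ (fun l : R^o => (l, z)) (fun z : R^o * V => z.1 *: z.2)); last exact: scale_continuous.
by apply: (@cvg_pair _ _ _ _ (nbhs l)); [exact: cvg_id|exact: cvg_cst].
Qed.

End Cont.

Section Vec.
Context {R : realType} {V : topologicalLmodType R} (N : V -> R).
Hypothesis nn : forall x, 0 <= N x.
Hypothesis hom : forall x (l : R), 0 < l -> N (l *: x) = l * N x.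

Lemma N0 : N 0 = 0.
Proof. have := @hom 0 2 (ltr0Sn R 1); rewrite scaler0 => E; lra. Qed.

Lemma sub_rc (S : set V) x : S x -> rel_closure S x.
Proof.
move=> Sx; split; last by move=> U _ Ux; exists x.
exists 1%N, (fun _ => 1), (fun _ => x); split => //.
  by rewrite big_ord1.
by rewrite big_ord1 scale1r.
Qed.

Lemma aff_all (r : R) v : 0 < r -> aff_hull (sublevel setT N r) v.
Proof.
move=> r0.
set k := r / (N v + 1).
have k0 : 0 < k by rewrite divr_gt0 // ltr_wpDl.
exists 2%N, (fun i => if val i == 0%N then k^-1 else 1 - k^-1),
  (fun i => if val i == 0%N then k *: v else 0); split.
- move=> i; split => //; case: ifP => _; last by rewrite N0 ltW.
  rewrite hom // /k mulrAC ler_pdivrMr ?ltr_wpDl // ler_pM2l //; lra.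
- by rewrite !big_ord_recl big_ord0 /= addr0; lra.
- by rewrite !big_ord_recl big_ord0 /= addr0 scaler0 addr0 scalerA mulVf ?gt_eqF ?scale1r.
Qed.

Lemma comb_sub (x y : V) (t : R) : (1 - t) *: x + t *: y - x = t *: (y - x).
Proof.
by rewrite scalerBl scale1r scalerBr addrAC [x - _ - x]addrAC subrr add0r addrC.
Qed.

Lemma seg_t (x y z : V) : open_segment x y z ->
  exists2 t : R, 0 < t < 1 & z = (1 - t) *: x + t *: y.
Proof.
move=> [[t /andP[t0 t1] ->]] nxy; exists t => //.
rewrite lt_neqAle t0 lt_neqAle t1 !andbT; apply/andP; split.
  apply/negP => /eqP t00; apply: nxy; left.
  by rewrite -t00 subr0 scale1r scale0r addr0.
apply/negP => /eqP t11; apply: nxy; right.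
by rewrite t11 subrr scale0r add0r scale1r.
Qed.


Lemma powR_ltW (p q a : R) : 0 < a -> 0 <= p -> 0 <= q -> p `^ a < q `^ a -> p < q.
Proof.
move=> a0 p0 q0; apply: contraTT; rewrite -!leNgt => qp.
by apply: (ge0_ler_powR (ltW a0)); rewrite ?nnegrE.
Qed.

Arguments powR_ltW {p q a}.
Lemma powR_leW (p q a : R) : 0 <= a -> 0 <= p -> 0 <= q -> p <= q -> p `^ a <= q `^ a.
Proof. by move=> a0 p0 q0 pq; apply: (ge0_ler_powR a0); rewrite ?nnegrE. Qed.

Variable alpha : R.
Hypothesis ha : 1 < alpha.

Section Dir2.
Hypothesis sc : strictly_convex_fun setT (fun x => N x `^ alpha).

Lemma pd2 x : x != 0 -> N x != 0.
Proof.
move=> x0; apply/negP => /eqP Nx.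
have xne : (0 : V) != x by rewrite eq_sym.
have t01 : 0 < (2 : R)^-1 < 1 by rewrite invr_gt0 ltr0n /= invf_lt1 ?ltr1n.
have := sc _ _ _ I I xne t01.
rewrite scaler0 add0r hom ?invr_gt0 // Nx N0 mulr0 powR0; last by rewrite gt_eqF // (lt_trans ltr01).
by rewrite !mulr0 addr0 ltxx.
Qed.

Lemma tri2 x y : N (x + y) <= N x + N y.
Proof.
have a0 : 0 < alpha by rewrite (lt_trans ltr01).
case: (eqVneq x 0) => [->|x0]; first by rewrite add0r N0 add0r.
case: (eqVneq y 0) => [->|y0]; first by rewrite addr0 N0 addr0.
set a := N x; set b := N y.
have ap : 0 < a by rewrite lt_neqAle eq_sym pd2 ?nn.
have bp : 0 < b by rewrite lt_neqAle eq_sym pd2 ?nn.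
set u := a^-1 *: x; set v := b^-1 *: y.
have Nu : N u = 1 by rewrite /u hom ?invr_gt0 // mulVf ?gt_eqF.
have Nv : N v = 1 by rewrite /v hom ?invr_gt0 // mulVf ?gt_eqF.
set t := b / (a + b).
have abp : 0 < a + b by rewrite addr_gt0.
set w := (1 - t) *: u + t *: v.
have E : x + y = (a + b) *: w.
  rewrite /w /u /v scalerDr !scalerA.
  have -> : (a + b) * (1 - t) * a^-1 = 1.
    by rewrite /t; field; rewrite ?gt_eqF.
  have -> : (a + b) * t * b^-1 = 1.
    by rewrite /t; field; rewrite ?gt_eqF.
  by rewrite !scale1r.
have Nw : N w <= 1.
  case: (eqVneq u v) => [uv|uv].
    by rewrite /w -uv -scalerDl subrK scale1r Nu.
  have t01 : 0 < t < 1.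
    by rewrite /t divr_gt0 //= ltr_pdivrMr // mul1r ltr_pwDl.
  have := sc _ _ _ I I uv t01; rewrite Nu Nv powR1 !mulr1 subrK => H.
  apply: ltW; apply: (powR_ltW a0 (nn _) ler01); by rewrite powR1.
rewrite E hom // -[X in _ <= X]mulr1 ler_pM2l //.
Qed.

Lemma pow_le_r (r : R) x : 0 <= r -> N x <= r -> N x `^ alpha <= r `^ alpha.
Proof. move=> r0 xr; apply: powR_leW => //; rewrite ltW // (lt_trans ltr01) //. Qed.

Lemma subconv2 : continuous N -> strictly_subconvex setT N.
Proof.
move=> cN r x y rcx rcy xy z seg.
have a0 : 0 < alpha by rewrite (lt_trans ltr01).
have inS w : rel_closure (sublevel setT N r) w -> N w <= r.
  move=> [_ H]; rewrite leNgt; apply/negP => rw.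
  have oU : open (N @^-1` [set s | r < s]).
    by apply: open_comp => [s _|]; [exact: cN|exact: open_gt].
  have [w' [/= h1 [_ h2]]] := H _ oU rw; lra.
have xr := inS _ rcx; have yr := inS _ rcy.
have r0 : 0 <= r by apply: le_trans xr.
have [t t01 ->] := seg_t _ _ _ seg.
have Hz : N ((1 - t) *: x + t *: y) < r.
  have := sc _ _ _ I I xy t01 => H.
  apply: (powR_ltW a0 (nn _) r0); apply: (lt_le_trans H).
  have := pow_le_r _ _ r0 xr; have := pow_le_r _ _ r0 yr.
  move: t01 => /andP[t0 t1] h1 h2.
  have : (1 - t) * N x `^ alpha <= (1 - t) * r `^ alpha by rewrite ler_wpM2l // subr_ge0 ltW.
  have : t * N y `^ alpha <= t * r `^ alpha by rewrite ler_wpM2l // ltW.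
  lra.
split; first by split => //; exact: ltW.
exists (N @^-1` [set s | s < r]); split => //.
  by apply: open_comp => [s _|]; [exact: cN|exact: open_lt].
by move=> w [/= wr _]; split => //; exact: ltW.
Qed.

End Dir2.


Section Dir1.
Hypothesis sub : strictly_subconvex setT N.
Hypothesis tri : forall x y, N (x + y) <= N x + N y.
Hypothesis pd : forall x, x != 0 -> N x != 0.

Lemma ri_lt (r : R) z : 0 < r -> rel_interior (sublevel setT N r) z -> N z < r.
Proof.
move=> r0 [[_ zr] [U [oU Uz sU]]].
rewrite lt_neqAle zr andbT; apply/negP => /eqP Nz.
have : nbhs (1 : R^o) ((fun l : R^o => l *: z) @^-1` U).
  apply: (cont_scal z 1); rewrite /= scale1r; exact: open_nbhs_nbhs.
move=> /nbhs_ballP [e /= e0 /(_ (1 + e / 2))].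
rewrite /ball /= opprD addrA subrr sub0r normrN gtr0_norm ?divr_gt0 //.
rewrite ltr_pdivrMr // ltr_pMr // ltr1n => /(_ isT) U1.
have [_ /=] := sU _ (conj U1 (aff_all _ _ r0)).
rewrite hom ?Nz ?addr_gt0 ?divr_gt0 // => H.
have : r < (1 + e / 2) * r by rewrite ltr_pMl // ltrDl divr_gt0.
lra.
Qed.

Lemma sconv1 : strictly_convex_fun setT (fun x => N x `^ alpha).
Proof.
move=> x y t _ _ xy t01.
have a0 : 0 < alpha by rewrite (lt_trans ltr01).
move: (t01) => /andP[t0 t1].
have t1' : 0 < 1 - t by rewrite subr_gt0.
set z := (1 - t) *: x + t *: y.
have Nz : N z <= (1 - t) * N x + t * N y.
  by rewrite -!hom //; apply: tri.
case: (eqVneq (N x) (N y)) => [Exy|Nxy]; last first.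
  apply: (le_lt_trans _ (jensen_strict _ _ _ _ ha (nn _) (nn _) Nxy t01)).
  apply: powR_leW => //; first exact: ltW.
  by rewrite addr_ge0 // mulr_ge0 ?nn // ltW.
set r := N y in Exy *.
have r0 : 0 < r.
  rewrite lt_neqAle nn andbT; apply/negP => /eqP r00.
  have X0 : x = 0 by case: (eqVneq x 0) => // /pd; rewrite Exy -r00 eqxx.
  have Y0 : y = 0 by case: (eqVneq y 0) => // /pd; rewrite -/r -r00 eqxx.
  by move: xy; rewrite X0 Y0 eqxx.
have Sx : sublevel setT N r x by split => //; rewrite Exy.
have Sy : sublevel setT N r y by split.
have seg : open_segment x y z.
  split; first by exists t => //; rewrite ltW ?ltW.
  move=> [zx|zy].
  - have : t *: (y - x) = 0 by rewrite -comb_sub -/z zx subrr.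
    by move/eqP; rewrite scaler_eq0 gt_eqF //= subr_eq0 eq_sym (negbTE xy).
  - have : (1 - t) *: (x - y) = 0.
      have e : 1 - (1 - t) = t by lra.
      by rewrite -comb_sub e [t *: y + _]addrC -/z zy subrr.
    by move/eqP; rewrite scaler_eq0 gt_eqF //= subr_eq0 (negbTE xy).
have := sub _ _ _ (sub_rc _ _ Sx) (sub_rc _ _ Sy) xy _ seg.
move/(ri_lt _ _ r0) => zr.
have : N z `^ alpha < r `^ alpha by apply: gt0_ltr_powR; rewrite ?nnegrE ?nn ?ltW.
rewrite Exy; lra.
Qed.

Lemma cont1 : continuous N.
Proof.
case: (pselect (exists x0 : V, x0 != 0)) => [[x0 x00]|]; last first.
  move=> H; have E : N = fun=> N 0.
    apply: funext => x; case: (eqVneq x 0) => [->//|x0]; exfalso; apply: H; by exists x.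
  by rewrite E; exact: cst_continuous.
have mx00 : - x0 != 0 by rewrite oppr_eq0.
set p := N x0; set q := N (- x0).
have p0 : 0 < p by rewrite lt_neqAle eq_sym pd ?nn.
have q0 : 0 < q by rewrite lt_neqAle eq_sym pd ?nn.
set P := p^-1 *: x0; set Q := q^-1 *: (- x0).
have NP : N P = 1 by rewrite /P hom ?invr_gt0 // mulVf ?gt_eqF.
have NQ : N Q = 1 by rewrite /Q hom ?invr_gt0 // mulVf ?gt_eqF.
set t := q / (p + q).
have pq0 : 0 < p + q by rewrite addr_gt0.
have t01 : 0 < t < 1 by rewrite /t divr_gt0 //= ltr_pdivrMr // mul1r ltr_pwDl.
have E0 : (1 - t) *: P + t *: Q = 0.
  rewrite /P /Q !scalerA scalerN.
  have -> : (1 - t) * p^-1 = t * q^-1 by rewrite /t; field; rewrite ?gt_eqF.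
  by rewrite subrr.
have P0 : P != 0 by apply/negP => /eqP P0; move: NP; rewrite P0 N0 => /eqP; rewrite eq_sym oner_eq0.
have Q0 : Q != 0 by apply/negP => /eqP Q0; move: NQ; rewrite Q0 N0 => /eqP; rewrite eq_sym oner_eq0.
have PQ : P != Q.
  apply/negP => /eqP PQ; move: E0; rewrite -PQ -scalerDl subrK scale1r => /eqP.
  by rewrite (negbTE P0).
have SP : sublevel setT N 1 P by split => //; rewrite NP.
have SQ : sublevel setT N 1 Q by split => //; rewrite NQ.
have seg : open_segment P Q 0.
  split; first by exists t; rewrite ?ltW ?(andP t01).1 ?(andP t01).2 ?E0.
  by move=> [/eqP|/eqP]; rewrite eq_sym ?(negbTE P0) ?(negbTE Q0).
have [_ [U [oU U0 sU]]] := sub _ _ _ (sub_rc _ _ SP) (sub_rc _ _ SQ) PQ _ seg.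
have UB w : U w -> N w <= 1.
  by move=> Uw; have [] := sU _ (conj Uw (aff_all _ _ ltr01)).
move=> a; apply/cvgrPdist_le => e e0.
have nU : nbhs (0 : V) U by exact: open_nbhs_nbhs.
have h1 : \forall s \near a, U (e^-1 *: (s - a)).
  by apply: (cont_aff a e^-1 a); rewrite /= subrr scaler0.
have h2 : \forall s \near a, U ((- e^-1) *: (s - a)).
  by apply: (cont_aff a (- e^-1) a); rewrite /= subrr scaler0.
near=> s.
have A1 : N (s - a) <= e.
  have U1 : U (e^-1 *: (s - a)) by near: s; exact: h1.
  have := UB _ U1; rewrite hom ?invr_gt0 // ler_pdivrMl // mulr1.
  done.
have A2 : N (a - s) <= e.
  have U2 : U (- e^-1 *: (s - a)) by near: s; exact: h2.
  have := UB _ U2; rewrite scaleNr -scalerN opprB hom ?invr_gt0 // ler_pdivrMl // mulr1.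
  done.
have T1 := tri a (s - a); rewrite addrC subrK in T1.
have T2 := tri s (a - s); rewrite addrC subrK in T2.
rewrite ler_norml; apply/andP; split; lra.
Unshelve. all: by end_near.
Qed.

End Dir1.

End Vec.

Theorem mainTheorem2 (R : realType) (V : topologicalLmodType R)
    (N : V -> R) (alpha : R) (halpha : 1 < alpha) :
  (strictly_subconvex setT N /\ minkowski_norm N) <->
  [/\ (forall x, 0 <= N x),
      (forall x (l : R), 0 < l -> N (l *: x) = l * N x),
      continuous N &
      strictly_convex_fun setT (fun x => N x `^ alpha)].
Proof.
split.
- move=> [sub [nn hom tri pd]]; split => //.
  + exact: (cont1 N nn hom sub tri pd).
  + exact: (sconv1 N nn hom alpha halpha sub tri pd).
- move=> [nn hom cN sc]; split; first exact: (subconv2 N nn alpha halpha sc cN).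
  split => //; [exact: (tri2 N nn hom alpha halpha sc)|exact: (pd2 N hom alpha halpha sc)].
Qed.
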